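(* Consider the economy without knowledge synergies and assume the abundance condition (A). Then for every $\boldsymbol m\in[0,1]^2$ an equilibrium exists, every equilibrium maximizes total output over feasible allocations, and in every equilibrium $r^*=F(\boldsymbol m)$ and $w^*=\max\{\tilde w_s,\tilde w_b,\tilde w_t\}$. Moreover, with these prices the following allocations form an equilibrium: if $\boldsymbol m\in\tilde R_s$: $\alpha_s^*=1$, $\mu_s^*=\mu$; if $\boldsymbol m\in\tilde R_b$: $\alpha_b^*=1$, $\mu_b^*=n(\boldsymbol m)$, $\mu_s^*=\mu-\mu_b^*$; if $\boldsymbol m\in\tilde R_t$: $\alpha_t^*=1$, $\mu_t^*=1/n(\boldsymbol h)$, $\mu_s^*=\mu-\mu_t^*$.
   Context: Fix a cumulative distribution function $F$ on $[0,1]^2$ with a density $f$ that has full support on $[0,1]^2$, $c\in(0,1)$, human knowledge $\boldsymbol h\in(0,1)^2$ (unit mass of humans, one unit of time each), and a mass $\mu>0$ of machines with knowledge $\boldsymbol m\in[0,1]^2$ (one unit of time each). Write $\boldsymbol x\wedge\boldsymbol y=(\min\{x_1,y_1\},\min\{x_2,y_2\})$, $F(\boldsymbol m\oplus\boldsymbol h):=F(\boldsymbol m)+F(\boldsymbol h)-F(\boldsymbol m\wedge\boldsymbol h)$ (the probability that the human or the machine can solve a problem on its own), and for $F(\boldsymbol x)<1$, $n(\boldsymbol x)=\frac1{c(1-F(\boldsymbol x))}$. Without synergies, given wage $w\ge0$ and rental $r\ge0$, the firm types and profits are: single-layer non-automated $F(\boldsymbol h)-w$; single-layer automated $F(\boldsymbol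 m)-r$; bottom-automated $b$ (one human solver, $n(\boldsymbol m)$ machine workers; available when $F(\boldsymbol m)<1$) $\Pi_b=n(\boldsymbol m)[F(\boldsymbol m\oplus\boldsymbol h)-r]-w$; top-automated $t$ (one machine solver, $n(\boldsymbol h)$ human workers) $\Pi_t=n(\boldsymbol h)[F(\boldsymbol m\oplus\boldsymbol h)-w]-r$. A feasible allocation is $(\alpha_s,\alpha_b,\alpha_t,\mu_s,\mu_b,\mu_t)\ge0$ with $\mu_b=\alpha_bn(\boldsymbol m)$, $\mu_t=\alpha_t/n(\boldsymbol h)$, $\alpha_s+\alpha_b+\alpha_t=1$, $\mu_s+\mu_b+\mu_t=\mu$; total output $Y=\alpha_bn(\boldsymbol m)F(\boldsymbol m\oplus\boldsymbol h)+\alpha_tF(\boldsymbol m\oplus\boldsymbol h)+\alpha_sF(\boldsymbol h)+\mu_sF(\boldsymbol m)$. An equilibrium is a feasible allocation with prices $(w,r)\ge0$ such that all firm types have nonpositive profit and types used with positive mass earn zero profit. Define $\tilde w_s=F(\boldsymbol h)$, $\tilde w_b=n(\boldsymbol m)(F(\boldsymbol m\oplus\boldsymbol h)-F(\boldsymbol m))$ (with $\tilde w_b:=0$ if $F(\boldsymbol m)=1$), $\tilde w_t=F(\boldsymbol m\oplus\boldsymbol h)-F(\boldsymbol m)/n(\boldsymbol h)$; $\tilde R_s=\{\boldsymbol m:\tilde w_s\ge\max\{\tilde w_b,\tilde w_t\}\}$, $\tilde R_b=\{\boldsymbol m:\tilde w_b>\max\{\tilde w_s,\tilde w_t\}\}$,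 $\tilde R_t=[0,1]^2\setminus(\tilde R_s\cup\tilde R_b)$. Abundance condition (A): $\mu>\max\Big\{\frac1{c(1-F(1,h_2))},\frac1{c(1-F(h_1,1))}\Big\}$. *)

(* Defs.v *)
From HB Require Import structures.
From mathcomp Require Import all_boot all_order all_algebra.
From mathcomp Require Import all_classical all_reals all_analysis.
Set Implicit Arguments. Unset Strict Implicit. Unset Printing Implicit Defensive.
Import Order.TTheory GRing.Theory Num.Theory.
Local Open Scope classical_set_scope.
Local Open Scope ring_scope.

Section Defs.
Variable R : realType.

Definition leb2 := ((@lebesgue_measure R) \x (@lebesgue_measure R))%E.

Definition unit_square : set (R * R) := `[0, 1] `*` `[0, 1].
Definition in_unit_square (x : R * R) : Prop := 0 <= x.1 <= 1 /\ 0 <= x.2 <= 1.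

(** f is a probability density on [0,1]^2 with full support on [0,1]^2:
    measurable, nonnegative, total mass 1 on the square, and every
    nondegenerate sub-rectangle of the square has positive mass
    (equivalently, every open set meeting the square has positive mass). *)
Definition density_full_support (f : R * R -> R) : Prop :=
  measurable_fun setT f /\ (forall p, 0 <= f p) /\
  (\int[leb2]_(p in unit_square) (f p)%:E = 1)%E /\
  (forall a b c d : R, 0 <= a -> a < b -> b <= 1 -> 0 <= c -> c < d -> d <= 1 ->
     (0 < \int[leb2]_(p in `[a, b] `*` `[c, d]) (f p)%:E)%E).

Definition cdf2 (f : R * R -> R) (x : R * R) : R :=
  fine (\int[leb2]_(p in `[0, x.1] `*` `[0, x.2]) (f p)%:E).

Definition meet2 (x y : R * R) : R * R := (Num.min x.1 y.1, Num.min x.2 y.2).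

Definition Foplus (F : R * R -> R) (m h : R * R) : R := F m + F h - F (meet2 m h).

(** n(x) = 1 / (c (1 - F x)), meaningful when F x < 1 *)
Definition nsp (F : R * R -> R) (c : R) (x : R * R) : R := 1 / (c * (1 - F x)).

Record alloc := Alloc {
  al_s : R; al_b : R; al_t : R; mu_s : R; mu_b : R; mu_t : R }.

(** feasibility; the bottom-automated type is available only when F(m) < 1,
    hence alpha_b = 0 is required otherwise *)
Definition feasible (F : R * R -> R) (c : R) (h m : R * R) (mu : R) (A : alloc) : Prop :=
  (0 <= al_s A /\ 0 <= al_b A /\ 0 <= al_t A /\ 0 <= mu_s A /\ 0 <= mu_b A /\ 0 <= mu_t A) /\
  (F m = 1 -> al_b A = 0) /\
  mu_b A = al_b A * nsp F c m /\ mu_t A = al_t A / nsp F c h /\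
  al_s A + al_b A + al_t A = 1 /\ mu_s A + mu_b A + mu_t A = mu.

Definition output (F : R * R -> R) (c : R) (h m : R * R) (A : alloc) : R :=
  al_b A * nsp F c m * Foplus F m h + al_t A * Foplus F m h
  + al_s A * F h + mu_s A * F m.

Definition profit_s (F : R * R -> R) (h : R * R) (w : R) : R := F h - w.
Definition profit_a (F : R * R -> R) (m : R * R) (r : R) : R := F m - r.
Definition profit_b (F : R * R -> R) (c : R) (h m : R * R) (w r : R) : R :=
  nsp F c m * (Foplus F m h - r) - w.
Definition profit_t (F : R * R -> R) (c : R) (h m : R * R) (w r : R) : R :=
  nsp F c h * (Foplus F m h - w) - r.

Definition equilibrium (F : R * R -> R) (c : R) (h m : R * R) (mu : R)
    (A : alloc) (w r : R) : Prop :=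
  feasible F c h m mu A /\ 0 <= w /\ 0 <= r /\
  profit_s F h w <= 0 /\ profit_a F m r <= 0 /\
  (F m < 1 -> profit_b F c h m w r <= 0) /\ profit_t F c h m w r <= 0 /\
  (0 < al_s A -> profit_s F h w = 0) /\ (0 < mu_s A -> profit_a F m r = 0) /\
  (0 < al_b A -> profit_b F c h m w r = 0) /\ (0 < al_t A -> profit_t F c h m w r = 0).

Definition wt_s (F : R * R -> R) (h : R * R) : R := F h.
Definition wt_b (F : R * R -> R) (c : R) (h m : R * R) : R :=
  if F m == 1 then 0 else nsp F c m * (Foplus F m h - F m).
Definition wt_t (F : R * R -> R) (c : R) (h m : R * R) : R :=
  Foplus F m h - F m / nsp F c h.

Definition in_Rs (F : R * R -> R) (c : R) (h m : R * R) : bool :=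
  Num.max (wt_b F c h m) (wt_t F c h m) <= wt_s F h.
Definition in_Rb (F : R * R -> R) (c : R) (h m : R * R) : bool :=
  Num.max (wt_s F h) (wt_t F c h m) < wt_b F c h m.
Definition in_Rt (F : R * R -> R) (c : R) (h m : R * R) : bool :=
  ~~ in_Rs F c h m && ~~ in_Rb F c h m.

Definition w_star (F : R * R -> R) (c : R) (h m : R * R) : R :=
  Num.max (wt_s F h) (Num.max (wt_b F c h m) (wt_t F c h m)).
Definition r_star (F : R * R -> R) (m : R * R) : R := F m.

Definition alloc_star (F : R * R -> R) (c : R) (h m : R * R) (mu : R) : alloc :=
  if in_Rs F c h m then Alloc 1 0 0 mu 0 0
  else if in_Rb F c h m then Alloc 0 1 0 (mu - nsp F c m) (nsp F c m) 0
  else Alloc 0 0 1 (mu - 1 / nsp F c h) 0 (1 / nsp F c h).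

Definition abundance (F : R * R -> R) (c : R) (h : R * R) (mu : R) : Prop :=
  Num.max (nsp F c (1, h.2)) (nsp F c (h.1, 1)) < mu.

End Defs.

(* Main.v *)
Require Import Defs.
From HB Require Import structures.
From mathcomp Require Import all_boot all_order all_algebra.
From mathcomp Require Import all_classical all_reals all_analysis.
From mathcomp Require Import measurable_realfun.
From mathcomp Require Import ring lra.
Import Order.TTheory GRing.Theory Num.Theory.
Local Open Scope ring_scope.

Section Meas.
Local Open Scope classical_set_scope.
Variables (R : realType) (f : R * R -> R).
Hypothesis Hd : density_full_support f.

Let rect (a b c d : R) : set (R * R) := `[a, b] `*` `[c, d].

Lemma mrect (a b c d : R) : measurable (rect a b c d).
Proof. exact: measurableX (measurable_itv _) (measurable_itv _). Qed.

Lemma mfE (D : set (R * R)) : measurable_fun D (EFin \o f).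
Proof.
case: Hd => mf _.
apply/(measurable_EFinP D f).
exact: measurable_funS mf.
Qed.

Lemma int_ge0 (D : set (R*R)) : (0 <= \int[@leb2 R]_(p in D) (f p)%:E)%E.
Proof. case: Hd => _ [f0 _]. by apply: integral_ge0 => x _; rewrite lee_fin. Qed.

Lemma int_sub (a b c d a' b' c' d' : R) : a' <= a -> b <= b' -> c' <= c -> d <= d' ->
  (\int[@leb2 R]_(p in rect a b c d) (f p)%:E <= \int[@leb2 R]_(p in rect a' b' c' d') (f p)%:E)%E.
Proof.
move=> h1 h2 h3 h4; case: Hd => _ [f0 _].
apply: ge0_subset_integral; [exact: mrect|exact: mrect|exact: mfE| |].
  by move=> x _; rewrite lee_fin.
move=> [x y] [/= Hx Hy]; split => /=.
  move: Hx; rewrite !in_itv /= => /andP[u v]; apply/andP; split.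
  exact: le_trans u. exact: le_trans h2.
move: Hy; rewrite !in_itv /= => /andP[u v]; apply/andP; split.
  exact: le_trans u. exact: le_trans h4.
Qed.


Lemma int_sq_le1 (a b c d : R) : 0 <= a -> b <= 1 -> 0 <= c -> d <= 1 ->
  (\int[@leb2 R]_(p in rect a b c d) (f p)%:E <= 1)%E.
Proof.
move=> ha hb hc hd; case: Hd => _ [_ [H1 _]].
rewrite -H1 /unit_square; exact: int_sub.
Qed.

Lemma cdfE (x : R * R) : in_unit_square x ->
  ((cdf2 f x)%:E = \int[@leb2 R]_(p in rect 0 x.1 0 x.2) (f p)%:E)%E.
Proof.
case=> /andP[_ h1] /andP[_ h2]; rewrite /cdf2 fineK //.
rewrite ge0_fin_numE; last exact: int_ge0.
have H := @int_sq_le1 0 x.1 0 x.2 (lexx 0) h1 (lexx 0) h2; apply: le_lt_trans H _; exact: ltry.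
Qed.

Lemma cdf_01 (x : R * R) : in_unit_square x -> 0 <= cdf2 f x <= 1.
Proof.
move=> hx; have := cdfE _ hx; case: (hx) => /andP[_ h1] /andP[_ h2] E.
apply/andP; split; rewrite -lee_fin E; first exact: int_ge0.
exact: int_sq_le1.
Qed.

Lemma cdf_mono (x y : R * R) : in_unit_square y -> x.1 <= y.1 -> x.2 <= y.2 ->
  cdf2 f x <= cdf2 f y.
Proof.
move=> hy h1 h2.
have [x1 | x1] := leP 0 x.1; last first.
  rewrite /cdf2.
  have -> : `[0, x.1] `*` `[0, x.2] = set0 :> set (R * R).
    apply/seteqP; split => // -[p q] [/= Hp _]; move: Hp; rewrite in_itv /= => /andP[u v].
    by have := le_trans u v; rewrite leNgt x1.
  rewrite integral_set0 /=; by case/andP: (cdf_01 _ hy).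
have [x2 | x2] := leP 0 x.2; last first.
  rewrite /cdf2.
  have -> : `[0, x.1] `*` `[0, x.2] = set0 :> set (R * R).
    apply/seteqP; split => // -[p q] [/= _ Hp]; move: Hp; rewrite in_itv /= => /andP[u v].
    by have := le_trans u v; rewrite leNgt x2.
  rewrite integral_set0 /=; by case/andP: (cdf_01 _ hy).
have hx : in_unit_square x.
  case: hy => /andP[_ u] /andP[_ v]; split; apply/andP; split => //.
  exact: le_trans u. exact: le_trans v.
rewrite -lee_fin (cdfE _ hx) (cdfE _ hy); exact: int_sub.
Qed.


Lemma split_lt1 (a b c d a' b' c' d' : R) :
  [disjoint rect a b c d & rect a' b' c' d'] ->
  rect a b c d `|` rect a' b' c' d' `<=` @unit_square R ->
  (0 < \int[@leb2 R]_(p in rect a' b' c' d') (f p)%:E)%E ->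
  (\int[@leb2 R]_(p in rect a b c d) (f p)%:E < 1)%E.
Proof.
move=> dis sub pos; case: Hd => _ [f0 [H1 _]].
have H : (\int[@leb2 R]_(p in rect a b c d `|` rect a' b' c' d') (f p)%:E <= 1)%E.
  rewrite -H1; apply: ge0_subset_integral => //.
  - apply: measurableU; exact: mrect.
  - exact: measurableX (measurable_itv _) (measurable_itv _).
  - exact: mfE.
  - by move=> x _; rewrite lee_fin.
rewrite ge0_integral_setU in H; [|exact: mrect|exact: mrect|exact: mfE| |exact: dis]; last first.
  by move=> x _; rewrite lee_fin.
have fin2 : (\int[@leb2 R]_(p in rect a' b' c' d') (f p)%:E)%E \is a fin_num.
  rewrite ge0_fin_numE; last exact: int_ge0.
  apply: le_lt_trans (ltry 1); apply: le_trans H; apply: leeDr; exact: int_ge0.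
have fin1 : (\int[@leb2 R]_(p in rect a b c d) (f p)%:E)%E \is a fin_num.
  rewrite ge0_fin_numE; last exact: int_ge0.
  apply: le_lt_trans (ltry 1); apply: le_trans H; apply: leeDl; exact: int_ge0.
move: H pos; rewrite -(fineK fin1) -(fineK fin2) -EFinD !lee_fin !lte_fin.
move=> u v; apply: lt_le_trans u; by rewrite ltrDl.
Qed.

Lemma cdf_lt1_a (t : R) : 0 <= t < 1 -> cdf2 f (1, t) < 1.
Proof.
case/andP=> t0 t1.
have hx : in_unit_square (1, t) by split; rewrite /= ?lexx ?ler01 ?t0 ?(ltW t1).
rewrite -lte_fin (cdfE _ hx) /=.
apply: (@split_lt1 _ _ _ _ 0 1 ((t + 1) / 2) 1).
- rewrite disj_set2E; apply/eqP/seteqP; split => // -[p q] [[_ /= Hq1] [_ /= Hq2]].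
  move: Hq1 Hq2; rewrite !in_itv /= => /andP[_ u] /andP[v _]; lra.
- move=> [p q] [] [/= Hp Hq]; split => //=; move: Hp Hq; rewrite !in_itv /=;
  move=> /andP[u v] /andP[u' v']; apply/andP; split; lra.
- case: Hd => _ [_ [_ Hpos]]; apply: Hpos; lra.
Qed.

Lemma cdf_lt1_b (t : R) : 0 <= t < 1 -> cdf2 f (t, 1) < 1.
Proof.
case/andP=> t0 t1.
have hx : in_unit_square (t, 1) by split; rewrite /= ?lexx ?ler01 ?t0 ?(ltW t1).
rewrite -lte_fin (cdfE _ hx) /=.
apply: (@split_lt1 _ _ _ _ ((t + 1) / 2) 1 0 1).
- rewrite disj_set2E; apply/eqP/seteqP; split => // -[p q] [[/= Hq1 _] [/= Hq2 _]].
  move: Hq1 Hq2; rewrite !in_itv /= => /andP[_ u] /andP[v _]; lra.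
- move=> [p q] [] [/= Hp Hq]; split => //=; move: Hp Hq; rewrite !in_itv /=;
  move=> /andP[u v] /andP[u' v']; apply/andP; split; lra.
- case: Hd => _ [_ [_ Hpos]]; apply: Hpos; lra.
Qed.

End Meas.

Lemma zprod (R : realType) (x y : R) : 0 <= x -> (0 < x -> y = 0) -> x * y = 0.
Proof.
rewrite le_eqVlt => /orP[/eqP <- _|H1 H2]; first by rewrite mul0r.
by rewrite (H2 H1) mulr0.
Qed.

Lemma nprod (R : realType) (x y : R) : 0 <= x -> (0 < x -> y <= 0) -> x * y <= 0.
Proof.
rewrite le_eqVlt => /orP[/eqP <- _|H1 H2]; first by rewrite mul0r.
by rewrite pmulr_rle0 // H2.
Qed.

Lemma maxcase (R : realType) (x y z : R) :
  ~~ (Num.max y z <= x) -> ~~ (Num.max x z < y) -> y <= z /\ x < z.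
Proof.
rewrite -ltNge -leNgt lt_max le_max => /orP[] H1 /orP[] H2; split; lra.
Qed.

Lemma core (R : realType) (F : R * R -> R) (c : R) (h : R * R) (mu : R) (m : R * R) :
  (forall x, in_unit_square x -> 0 <= F x <= 1) ->
  (forall x y, in_unit_square y -> x.1 <= y.1 -> x.2 <= y.2 -> F x <= F y) ->
  F (1, h.2) < 1 -> F (h.1, 1) < 1 ->
  0 < c < 1 -> 0 < h.1 < 1 -> 0 < h.2 < 1 -> 0 < mu -> abundance F c h mu ->
  in_unit_square m ->
    (exists (A : alloc R) (w r : R), equilibrium F c h m mu A w r) /\
    (forall (A : alloc R) (w r : R), equilibrium F c h m mu A w r ->
       forall A' : alloc R, feasible F c h m mu A' ->
         output F c h m A' <= output F c h m A) /\
    (forall (A : alloc R) (w r : R), equilibrium F c h m mu A w r ->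
       r = F m /\ w = w_star F c h m) /\
    equilibrium F c h m mu (alloc_star F c h m mu) (w_star F c h m) (r_star F m).
Proof.
move=> F01 Fmono g1 g2 /andP[c0 c1] /andP[h10 h11] /andP[h20 h21] mu0 ab msq.
have sq1 : in_unit_square (1, h.2) by split; rewrite /= ?lexx ?ler01 ?(ltW h20) ?(ltW h21).
have sq2 : in_unit_square (h.1, 1) by split; rewrite /= ?lexx ?ler01 ?(ltW h10) ?(ltW h11).
have sqh : in_unit_square h by split; rewrite /= ?(ltW h20) ?(ltW h21) ?(ltW h10) ?(ltW h11).
have [[m10 m11] [m20 m21]] : (0 <= m.1 /\ m.1 <= 1) /\ (0 <= m.2 /\ m.2 <= 1).
  by case: msq => /andP[? ?] /andP[? ?].
have [a0 a1] : 0 <= F m /\ F m <= 1 by case/andP: (F01 _ msq).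
have b0 : 0 <= F h by case/andP: (F01 _ sqh).
have bg1 : F h <= F (1, h.2) by apply: Fmono => //=; exact: ltW.
have b1 : F h < 1 by exact: le_lt_trans bg1 g1.
have g10 : 0 <= F (1, h.2) by case/andP: (F01 _ sq1).
have g20 : 0 <= F (h.1, 1) by case/andP: (F01 _ sq2).
have k0 : 0 < c * (1 - F h) by rewrite mulr_gt0 // subr_gt0.
have cb0 : 0 <= c * F h by rewrite mulr_ge0 // ltW.
have k1 : c * (1 - F h) < 1 by lra.
have nhE : (nsp F c h)^-1 = c * (1 - F h) by rewrite /nsp div1r invrK.
have nh0 : 0 < nsp F c h by rewrite /nsp div1r invr_gt0.
have nhk : nsp F c h * (c * (1 - F h)) = 1 by rewrite -nhE mulfV // gt_eqF.
move: ab; rewrite /abundance gt_max => /andP[ab1 ab2].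
have mu1 : 1 < mu.
  apply: le_lt_trans ab1; rewrite /nsp div1r invf_ge1; last by rewrite mulr_gt0 // subr_gt0.
  have : 0 <= c * F (1, h.2) by rewrite mulr_ge0 // ltW.
  lra.
have K : F (meet2 m h) != F h -> F m < 1 /\ nsp F c m < mu.
  move=> ne.
  have : ~~ ((h.1 <= m.1) && (h.2 <= m.2)).
    apply: contra ne => /andP[u v]; rewrite /meet2 (min_r u) (min_r v).
    by rewrite -surjective_pairing.
  rewrite negb_and -!ltNge => /orP[mh | mh].
  - have ag : F m <= F (h.1, 1) by apply: Fmono => //=; exact: ltW.
    have am : F m < 1 by exact: le_lt_trans ag g2.
    split => //; apply: le_lt_trans ab2.
    rewrite /nsp !div1r lef_pV2 ?posrE ?mulr_gt0 ?subr_gt0 //.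
    by rewrite ler_wpM2l ?(ltW c0) // lerB.
  - have ag : F m <= F (1, h.2) by apply: Fmono => //=; exact: ltW.
    have am : F m < 1 by exact: le_lt_trans ag g1.
    split => //; apply: le_lt_trans ab1.
    rewrite /nsp !div1r lef_pV2 ?posrE ?mulr_gt0 ?subr_gt0 //.
    by rewrite ler_wpM2l ?(ltW c0) // lerB.
have ws1 : wt_s F h <= w_star F c h m by rewrite /w_star le_max lexx.
have ws2 : wt_b F c h m <= w_star F c h m by rewrite /w_star !le_max lexx orbT.
have ws3 : wt_t F c h m <= w_star F c h m by rewrite /w_star !le_max lexx !orbT.
have wbE : F m < 1 -> wt_b F c h m = nsp F c m * (Foplus F m h - F m).
  by move=> am; rewrite /wt_b lt_eqF.
have wtE : wt_t F c h m = Foplus F m h - F m * (c * (1 - F h)) by rewrite /wt_t nhE.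
have ptE : forall w r, profit_t F c h m w r =
    nsp F c h * (Foplus F m h - w - r * (c * (1 - F h))).
  by move=> w r; rewrite /profit_t [RHS]mulrBr mulrCA nhk mulr1.
have nm0 : F m < 1 -> 0 < nsp F c m.
  by move=> am; rewrite /nsp div1r invr_gt0 mulr_gt0 // subr_gt0.
have common : forall A : alloc R, feasible F c h m mu A ->
    (0 < al_s A -> w_star F c h m = F h) ->
    (0 < al_b A -> profit_b F c h m (w_star F c h m) (F m) = 0) ->
    (0 < al_t A -> profit_t F c h m (w_star F c h m) (F m) = 0) ->
    equilibrium F c h m mu A (w_star F c h m) (r_star F m).
  move=> A fA zs zb zt; rewrite /equilibrium /r_star.
  split => //; split; first exact: le_trans b0 ws1.
  split => //; split; first by rewrite /profit_s subr_le0.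
  split; first by rewrite /profit_a subrr.
  split; first by move=> am; rewrite /profit_b subr_le0 -(wbE am).
  split; first by rewrite ptE pmulr_rle0 //; move: ws3; rewrite wtE; lra.
  split; first by move=> /zs ->; rewrite /profit_s subrr.
  split; first by move=> _; rewrite /profit_a subrr.
  by split.
have E4 : equilibrium F c h m mu (alloc_star F c h m mu) (w_star F c h m) (r_star F m).
  rewrite /alloc_star; case: ifP => Rs.
    apply: common => /=.
    - rewrite /feasible /= !mul0r; do !split => //; rewrite ?addr0 // ?ltW //.
    - by move=> _; rewrite /w_star max_l.
    - by rewrite ltxx.
    - by rewrite ltxx.
  case: ifP => Rb.
    have Fm1 : F m < 1.
      rewrite lt_neqAle a1 andbT; apply/negP => /eqP E; move: Rb.
      rewrite /in_Rb /wt_b E eqxx gt_max /wt_s => /andP[u _]; lra.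
    have zne : F (meet2 m h) != F h.
      apply/negP => /eqP E; move: Rb.
      rewrite /in_Rb (wbE Fm1) /Foplus E addrK subrr mulr0 gt_max /wt_s => /andP[u _]; lra.
    have [_ nmu] := K zne.
    have wsE : w_star F c h m = wt_b F c h m.
      move: Rb; rewrite /in_Rb gt_max => /andP[u v].
      by rewrite /w_star (max_l (ltW v)) max_r // ltW.
    apply: common => /=.
    - rewrite /feasible /= mul1r mul0r; do !split => //; rewrite ?addr0 ?add0r //.
      + by rewrite subr_ge0 ltW.
      + exact: ltW (nm0 Fm1).
      + by move=> E; move: Fm1; rewrite E ltxx.
      + by rewrite subrK.
    - by rewrite ltxx.
    - by move=> _; rewrite /profit_b wsE (wbE Fm1) subrr.
    - by rewrite ltxx.
  have [u v] := @maxcase R _ _ _ (negbT Rs) (negbT Rb).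
  have wsE : w_star F c h m = wt_t F c h m.
    by rewrite /w_star (max_r u) (max_r (ltW v)).
  apply: common => /=.
  - rewrite /feasible /= !mul0r; do !split => //; rewrite ?addr0 ?add0r ?div1r ?nhE //.
    + lra.
    + exact: ltW.
    + by rewrite subrK.
  - by rewrite ltxx.
  - by rewrite ltxx.
  - move=> _; rewrite ptE wsE wtE; apply/eqP; rewrite mulf_eq0; apply/orP; right.
    apply/eqP; ring.
split; first by exists (alloc_star F c h m mu), (w_star F c h m), (r_star F m).
split.
  move=> A w r [fA [w0 [r0 [ps [pa [pb [pt [zs [za [zb zt]]]]]]]]]] A' fA'.
  case: fA => [[sA0 [bA0 [tA0 [msA0 [mbA0 mtA0]]]]] [Fb [mbE [mtE [sumA summu]]]]].
  case: fA' => [[sA0' [bA0' [tA0' [msA0' [mbA0' mtA0']]]]] [Fb' [mbE' [mtE' [sumA' summu']]]]].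
  rewrite nhE in mtE mtE'.
  have key : forall B : alloc R, mu_b B = al_b B * nsp F c m ->
      mu_t B = al_t B * (c * (1 - F h)) ->
      output F c h m B - (w * (al_s B + al_b B + al_t B) + r * (mu_s B + mu_b B + mu_t B))
      = al_b B * (nsp F c m * (Foplus F m h - r) - w)
        + al_t B * (Foplus F m h - w - r * (c * (1 - F h)))
        + al_s B * (F h - w) + mu_s B * (F m - r).
    move=> B -> ->; rewrite /output; ring.
  have kA := key A mbE mtE; have kA' := key A' mbE' mtE'.
  rewrite sumA summu in kA; rewrite sumA' summu' in kA'.
  have eb : al_b A * (nsp F c m * (Foplus F m h - r) - w) = 0.
    apply: zprod => // H; exact: zb H.
  have et : al_t A * (Foplus F m h - w - r * (c * (1 - F h))) = 0.
    apply: zprod => // H; move: (zt H); rewrite ptE => /eqP.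
    by rewrite mulf_eq0 (gt_eqF nh0) /= => /eqP.
  have es : al_s A * (F h - w) = 0 by apply: zprod => // H; exact: zs H.
  have ea : mu_s A * (F m - r) = 0 by apply: zprod => // H; exact: za H.
  have eb' : al_b A' * (nsp F c m * (Foplus F m h - r) - w) <= 0.
    apply: nprod => // H; apply: pb; rewrite lt_neqAle a1 andbT.
    by apply/negP => /eqP /Fb' E; move: H; rewrite E ltxx.
  have et' : al_t A' * (Foplus F m h - w - r * (c * (1 - F h))) <= 0.
    by apply: nprod => // H; move: pt; rewrite ptE pmulr_rle0.
  have es' : al_s A' * (F h - w) <= 0 by apply: nprod.
  have ea' : mu_s A' * (F m - r) <= 0 by apply: nprod.
  lra.
have E3 : forall (A : alloc R) (w r : R), equilibrium F c h m mu A w r ->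
       r = F m /\ w = w_star F c h m.
  move=> A w r [fA [w0 [r0 [ps [pa [pb [pt [zs [za [zb zt]]]]]]]]]].
  case: fA => [[sA0 [bA0 [tA0 [msA0 [mbA0 mtA0]]]]] [Fb [mbE [mtE [sumA summu]]]]].
  rewrite nhE in mtE.
  move: pa; rewrite /profit_a => pa.
  have Fm1 : 0 < al_b A -> F m < 1.
    move=> H; rewrite lt_neqAle a1 andbT.
    by apply/negP => /eqP /Fb E; move: H; rewrite E ltxx.
  have rE : r = F m.
    suff : r <= F m by lra.
    rewrite le_eqVlt in bA0; case/orP: bA0 =>[/eqP bz | bp].
      have tk : al_t A * (c * (1 - F h)) <= c * (1 - F h).
        rewrite -[X in _ <= X]mul1r; apply: ler_wpM2r; [exact: ltW | lra].
      rewrite -bz mul0r in mbE.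
      have : 0 < mu_s A by lra.
      by move/za; rewrite /profit_a; lra.
    have am := Fm1 bp.
    have Or : 0 <= Foplus F m h - r.
      have := zb bp; rewrite /profit_b => /eqP; rewrite subr_eq0 => /eqP E.
      by rewrite -(pmulr_rge0 _ (nm0 am)) E.
    case: (eqVneq (F (meet2 m h)) (F h)) => [E | ne].
      by move: Or; rewrite /Foplus E addrK subr_ge0.
    have [_ nmu] := K ne.
    have H1 : al_b A * nsp F c m < al_b A * mu by rewrite ltr_pM2l.
    have H2 : al_t A * (c * (1 - F h)) <= al_t A * mu by rewrite ler_wpM2l //; lra.
    have H3 : 0 <= al_s A * mu by rewrite mulr_ge0 // ltW.
    have H4 : (al_s A + al_b A + al_t A) * mu = mu by rewrite sumA mul1r.
    have : 0 < mu_s A by lra.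
    by move/za; rewrite /profit_a; lra.
  split => //; subst r.
  apply/eqP; rewrite eq_le; apply/andP; split.
  - rewrite le_eqVlt in sA0; case/orP: sA0 =>[/eqP sz | sp].
      rewrite le_eqVlt in bA0; case/orP: bA0 =>[/eqP bz | bp].
        rewrite le_eqVlt in tA0; case/orP: tA0 =>[/eqP tz | tp].
          by move: sumA; rewrite -sz -bz -tz !addr0 => /eqP; rewrite eq_sym oner_eq0.
        move: (zt tp); rewrite ptE => /eqP; rewrite mulf_eq0 (gt_eqF nh0) /= => /eqP E.
        apply: le_trans ws3; rewrite wtE; lra.
      move: (zb bp); rewrite /profit_b => /eqP; rewrite subr_eq0 => /eqP E.
      by apply: le_trans ws2; rewrite (wbE (Fm1 bp)) -E.
    move: (zs sp); rewrite /profit_s => /eqP; rewrite subr_eq0 => /eqP E.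
    by apply: le_trans ws1; rewrite /wt_s E.
  - rewrite /w_star !ge_max; apply/and3P; split.
    + by move: ps; rewrite /profit_s /wt_s subr_le0.
    + rewrite /wt_b; case: ifP => [_ //|/negbT am].
      have am' : F m < 1 by rewrite lt_neqAle am a1.
      by move: (pb am'); rewrite /profit_b subr_le0.
    + by move: pt; rewrite ptE pmulr_rle0 // wtE; lra.
by split.
Qed.

Theorem mainTheorem7 (R : realType) (f : R * R -> R) (c : R) (h : R * R) (mu : R) :
  density_full_support f ->
  0 < c < 1 ->
  0 < h.1 < 1 -> 0 < h.2 < 1 ->
  0 < mu ->
  abundance (cdf2 f) c h mu ->
  forall m : R * R, in_unit_square m ->
    let F := cdf2 f in
    (exists (A : alloc R) (w r : R), equilibrium F c h m mu A w r) /\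
    (forall (A : alloc R) (w r : R), equilibrium F c h m mu A w r ->
       forall A' : alloc R, feasible F c h m mu A' ->
         output F c h m A' <= output F c h m A) /\
    (forall (A : alloc R) (w r : R), equilibrium F c h m mu A w r ->
       r = F m /\ w = w_star F c h m) /\
    equilibrium F c h m mu (alloc_star F c h m mu) (w_star F c h m) (r_star F m).
Proof.
move=> Hd hc h1 h2 hmu ab m hm F.
case/andP: (h1) => h10 h11; case/andP: (h2) => h20 h21.
apply: core => //.
- exact: cdf_01.
- move=> x y hy; exact: cdf_mono.
- by apply: cdf_lt1_a => //; rewrite (ltW h20) h21.
- by apply: cdf_lt1_b => //; rewrite (ltW h10) h11.
Qed.
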